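(* Let $G$ and $H$ be graphs and let $f,f'\colon \varGamma(H)\to \varGamma(G)$ be properad morphisms such that the image of $f$ and the image of $f'$ are both subgraphs of $G$. If $f_0=f'_0$ as functions $\mathrm{Ed}(H)\to \mathrm{Ed}(G)$, then $f=f'$. That is, a properad map $\varGamma(H)\to\varGamma(G)$ whose image is a subgraph of $G$ is uniquely determined by its effect on edges.
   Context: A graph is a finite connected directed graph, allowed to have legs (edges attached to a vertex at only one end; the graph $\downarrow$ consisting of a single edge and no vertex is allowed), with no directed cycles, together with orderings (bijections with $\{1,\dots,k\}$) of its global inputs $\mathrm{in}(G)$ and outputs $\mathrm{out}(G)$ and of the inputs $\mathrm{in}(v)$ and outputs $\mathrm{out}(v)$ of each vertex $v\in\mathrm{Vt}(G)$; $\mathrm{Ed}(G)$ denotes its set of edges. Graph substitution $K\{L_v\}_{v}$ replaces each vertex $v$ of $K$ by a graph $L_v$ whose inputs and outputs are identified bijectively (and compatibly with colorings) with $\mathrm{in}(v)$ and $\mathrm{out}(v)$. For a graph $G$, the properad $\varGamma(G)$ has color set $\mathrm{Ed}(G)$, and its operations of biprofile $(\underline c;\underline d)$ are $\hat G$-decorated graphs: graphs $K$ with inputs $\underline c$ and outputs $\underline d$ whose edges are colored by edges of $G$, together with a function $\mathrm{Vt}(K)\to\mathrm{Vt}(G)$ compatible with the colorings; composition is graph substitution. A properad morphism $f\colon\varGamma(H)\to\varGamma(G)$ consists of a function $f_0\colon \mathrm{Ed}(H)\to\mathrm{Ed}(G)$ and an assignment $f_1$ sending each $v\in\mathrm{Vt}(H)$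 to a $\hat G$-decorated graph with inputs $f_0(\mathrm{in}(v))$ and outputs $f_0(\mathrm{out}(v))$. The image of $f$ is the $\hat G$-decorated graph $f_0H\{f_1(v)\}_{v\in\mathrm{Vt}(H)}$, obtained by relabeling the edges of $H$ via $f_0$ and substituting $f_1(v)$ at each vertex $v$; saying the image is a subgraph of $G$ means that via its decorations this graph is identified with a subgraph of $G$. *)

(* Defs.v *)
From mathcomp Require Import all_boot.


(* An edge e goes
   from [psrc e] to [ptgt e]; [psrc e = None] means e is a global input
   (it has no initial vertex), [ptgt e = None] means e is a global output.
   Thus e \in in(v) iff ptgt e = Some v, and e \in out(v) iff psrc e = Some v.
   The lists [pin], [pout], [pvin v], [pvout v] are the orderings of
   in(G), out(G), in(v), out(v).                                            *)
Record pregraph := PreGraph {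
  pV : finType;
  pE : finType;
  psrc : pE -> option pV;
  ptgt : pE -> option pV;
  pin : seq pE;
  pout : seq pE;
  pvin : pV -> seq pE;
  pvout : pV -> seq pE }.

Arguments psrc {p} _.
Arguments ptgt {p} _.
Arguments pvin p _ : assert.
Arguments pvout p _ : assert.

Definition incid (P : pregraph) : rel (pV P + pE P)%type :=
  fun x y =>
    match x, y with
    | inl v, inr e => (psrc e == Some v) || (ptgt e == Some v)
    | inr e, inl v => (psrc e == Some v) || (ptgt e == Some v)
    | _, _ => false
    end.

Definition vrel (P : pregraph) : rel (pV P) :=
  fun u w => [exists e : pE P, (psrc e == Some u) && (ptgt e == Some w)].

Definition is_graph (P : pregraph) : Prop :=
  perm_eq (pin P) [seq e <- enum (pE P) | psrc e == None] /\
  perm_eq (pout P) [seq e <- enum (pE P) | ptgt e == None] /\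
  (forall v, perm_eq (pvin P v) [seq e <- enum (pE P) | ptgt e == Some v]) /\
  (forall v, perm_eq (pvout P v) [seq e <- enum (pE P) | psrc e == Some v]) /\
  0 < #|{: (pV P + pE P)%type}| /\
  (forall x y : (pV P + pE P)%type, connect (@incid P) x y) /\
  (forall u w : pV P, vrel P u w -> ~~ connect (@vrel P) w u).

Record decorated (G : pregraph) := Decorated {
  dgr : pregraph;
  dE : pE dgr -> pE G;
  dV : pV dgr -> pV G }.

Arguments dgr {G} _.
Arguments dE {G} _ _.
Arguments dV {G} _ _.

Definition is_decorated (G : pregraph) (D : decorated G) : Prop :=
  is_graph (dgr D) /\
  forall w : pV (dgr D),
    perm_eq (map (dE D) (pvin (dgr D) w)) (pvin G (dV D w)) /\
    perm_eq (map (dE D) (pvout (dgr D) w)) (pvout G (dV D w)).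

(* Equality of operations of Gamma(G): isomorphism of decorated graphs,
   preserving the global orderings of inputs/outputs, the incidence
   structure, and the decorations. *)
Definition dec_iso (G : pregraph) (D D' : decorated G) : Prop :=
  exists (phiV : pV (dgr D) -> pV (dgr D')) (phiE : pE (dgr D) -> pE (dgr D')),
    bijective phiV /\ bijective phiE /\
    (forall e, psrc (phiE e) = omap phiV (psrc e)) /\
    (forall e, ptgt (phiE e) = omap phiV (ptgt e)) /\
    map phiE (pin (dgr D)) = pin (dgr D') /\
    map phiE (pout (dgr D)) = pout (dgr D') /\
    (forall e, dE D' (phiE e) = dE D e) /\
    (forall w, dV D' (phiV w) = dV D w).

Record prop_morph (H G : pregraph) := PropMorph {
  f0 : pE H -> pE G;
  f1 : pV H -> decorated G }.

Arguments f0 {H G} _ _.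
Arguments f1 {H G} _ _.

Definition is_prop_morph (H G : pregraph) (f : prop_morph H G) : Prop :=
  forall v : pV H,
    is_decorated G (f1 f v) /\
    map (dE (f1 f v)) (pin (dgr (f1 f v))) = map (f0 f) (pvin H v) /\
    map (dE (f1 f v)) (pout (dgr (f1 f v))) = map (f0 f) (pvout H v).

(* Edges: all edges of H together with all edges of all f1 v, where the
   i-th input (output) of f1 v is glued to the i-th input (output) of v in
   H; the edges of the image are the equivalence classes of the gluing.   *)
Section Image.
Variables (H G : pregraph) (f : prop_morph H G).

Let L (v : pV H) := dgr (f1 f v).

Definition imX := (pE H + {v : pV H & pE (L v)})%type.

Definition glue1 : rel imX := fun x y =>
  match x, y with
  | inr t, inl h =>
      ((tagged t, h) \in zip (pin (L (tag t))) (pvin H (tag t))) ||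
      ((tagged t, h) \in zip (pout (L (tag t))) (pvout H (tag t)))
  | _, _ => false
  end.

Definition glue : rel imX := fun x y => glue1 x y || glue1 y x.

Lemma glue_sym : symmetric glue.
Proof. by move=> x y; rewrite /glue orbC. Qed.

Lemma glue_connect_sym : connect_sym glue.
Proof. exact: sym_connect_sym glue_sym. Qed.

Definition imE := {x : imX | root glue x == x}.

Definition imcl (x : imX) : imE :=
  exist _ (root glue x) (introT eqP (root_root glue_connect_sym x)).

Definition imV := {v : pV H & pV (L v)}.

Definition srcX (x : imX) : option imV :=
  match x with
  | inl _ => None
  | inr t => omap (fun w => Tagged (fun v => pV (L v)) w) (psrc (tagged t))
  end.

Definition tgtX (x : imX) : option imV :=
  match x with
  | inl _ => None
  | inr t => omap (fun w => Tagged (fun v => pV (L v)) w) (ptgt (tagged t))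
  end.

Definition colX (x : imX) : pE G :=
  match x with
  | inl h => f0 f h
  | inr t => dE (f1 f (tag t)) (tagged t)
  end.

Definition im_src (c : imE) : option imV :=
  if [pick x | (root glue x == val c) && (srcX x != None)] is Some x
  then srcX x else None.

Definition im_tgt (c : imE) : option imV :=
  if [pick x | (root glue x == val c) && (tgtX x != None)] is Some x
  then tgtX x else None.

Definition im_graph : pregraph :=
  @PreGraph imV imE im_src im_tgt
    [seq imcl (inl h) | h <- pin H]
    [seq imcl (inl h) | h <- pout H]
    (fun w => [seq imcl (inr (Tagged (fun v => pE (L v)) e)) | e <- pvin (L (tag w)) (tagged w)])
    (fun w => [seq imcl (inr (Tagged (fun v => pE (L v)) e)) | e <- pvout (L (tag w)) (tagged w)]).

Definition morph_image : decorated G :=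
  @Decorated G im_graph (fun c : imE => colX (val c))
    (fun w : imV => dV (f1 f (tag w)) (tagged w)).

End Image.

(* A decorated graph D is (via its decorations) identified with a subgraph
   of G: D is a graph, its decorations are injective on edges and vertices,
   compatible with the colorings, the incidence structure of D is the one
   induced from G, and the set of vertices is convex in G (every directed
   path of G between two vertices of D stays inside D), which is exactly
   the condition that G is obtained by substituting D into a vertex of a
   (acyclic) graph, with corollas at the other vertices.                  *)
Definition is_subgraph (G : pregraph) (D : decorated G) : Prop :=
  is_decorated G D /\
  injective (dE D) /\
  injective (dV D) /\
  (forall e w, psrc e = Some w <-> psrc (dE D e) = Some (dV D w)) /\
  (forall e w, ptgt e = Some w <-> ptgt (dE D e) = Some (dV D w)) /\
  (forall (u w : pV (dgr D)) (x : pV G),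
     connect (vrel G) (dV D u) x -> connect (vrel G) x (dV D w) ->
     exists y, dV D y = x).

Arguments morph_image {H G} f.
Arguments is_prop_morph {H G} f.
Arguments dec_iso {G} D D'.
Arguments is_subgraph {G} D.

(* Main.v *)
Require Import Defs.
From mathcomp Require Import all_boot.
Set Implicit Arguments. Unset Strict Implicit.

Lemma gr_vin (P : pregraph) : is_graph P -> forall v e, (e \in pvin P v) = (ptgt e == Some v).
Proof. by case=> _ [_ [h _]] v e; rewrite (perm_mem (h v)) mem_filter mem_enum andbT. Qed.
Lemma gr_vout (P : pregraph) : is_graph P -> forall v e, (e \in pvout P v) = (psrc e == Some v).
Proof. by case=> _ [_ [_ [h _]]] v e; rewrite (perm_mem (h v)) mem_filter mem_enum andbT. Qed.
Lemma gr_in (P : pregraph) : is_graph P -> forall e, (e \in pin P) = (psrc e == None).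
Proof. by case=> h _ e; rewrite (perm_mem h) mem_filter mem_enum andbT. Qed.
Lemma gr_out (P : pregraph) : is_graph P -> forall e, (e \in pout P) = (ptgt e == None).
Proof. by case=> _ [h _] e; rewrite (perm_mem h) mem_filter mem_enum andbT. Qed.
Lemma gr_uvin (P : pregraph) : is_graph P -> forall v, uniq (pvin P v).
Proof. by case=> _ [_ [h _]] v; rewrite (perm_uniq (h v)) filter_uniq ?enum_uniq. Qed.
Lemma gr_uvout (P : pregraph) : is_graph P -> forall v, uniq (pvout P v).
Proof. by case=> _ [_ [_ [h _]]] v; rewrite (perm_uniq (h v)) filter_uniq ?enum_uniq. Qed.
Lemma gr_uin (P : pregraph) : is_graph P -> uniq (pin P).
Proof. by case=> h _; rewrite (perm_uniq h) filter_uniq ?enum_uniq. Qed.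
Lemma gr_uout (P : pregraph) : is_graph P -> uniq (pout P).
Proof. by case=> _ [h _]; rewrite (perm_uniq h) filter_uniq ?enum_uniq. Qed.

Lemma connect_first (T : finType) (F : rel T) a b : connect F a b -> a != b ->
  exists a1, F a a1 /\ connect F a1 b.
Proof.
move=> /connectP [[|a1 p]] /= ; first by move=> _ ->; rewrite eqxx.
move=> /andP [Fa pa] -> _; exists a1; split=> //; apply/connectP; by exists p.
Qed.

Lemma connect_lastS (T : finType) (F : rel T) a b : connect F a b -> a != b ->
  exists b1, connect F a b1 /\ F b1 b.
Proof.
move=> /connectP [p]; elim/last_ind: p => [|p z _] /=; first by move=> _ ->; rewrite eqxx.
rewrite rcons_path last_rcons => /andP [pp Fz] -> _; exists (last a p); split=> //.
by apply/connectP; exists p.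
Qed.

Lemma sym_connect_split (T : finType) (F : rel T) :
  (forall x y y', F x y -> F x y' -> y = y') ->
  (forall x x' y, F x y -> F x' y -> x = x') ->
  forall x y, connect (fun a b => F a b || F b a) x y -> connect F x y \/ connect F y x.
Proof.
move=> Ff Fb x y /connectP [p]; elim: p x => [|z p IH] x /=.
  by move=> _ ->; left.
move=> /andP [exz pz] ey; have [Czy|Cyz] := IH z pz ey; case/orP: exz => Fxz.
- by left; apply: connect_trans (connect1 Fxz) Czy.
- have [E|nzy] := eqVneq z y; first by rewrite -E; right; apply: connect1.
  have [z1 [Fz1 C1]] := connect_first Czy nzy.
  rewrite (Ff _ _ _ Fxz Fz1); by left.
- have [E|nyz] := eqVneq y z; first by rewrite E; left; apply: connect1.
  have [z1 [C1 Fz1]] := connect_lastS Cyz nyz.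
  rewrite (Fb _ _ _ Fxz Fz1); by right.
- by right; apply: connect_trans Cyz (connect1 Fxz).
Qed.

Definition psi (G : pregraph) (D : decorated G) : pred (pV G + pE G) :=
  fun y => match y with inl z => [exists w, dV D w == z] | inr e => [exists t, dE D t == e] end.
Definition cut (G : pregraph) (Bi Bo : seq (pE G)) : rel (pV G + pE G) :=
  fun x y => match x, y with
  | inl z, inr e | inr e, inl z => ((e \in Bi) && (psrc e == Some z)) || ((e \in Bo) && (ptgt e == Some z))
  | _, _ => false end.
Definition Rc (G : pregraph) (Bi Bo : seq (pE G)) : rel (pV G + pE G) :=
  fun x y => incid G x y && ~~ cut Bi Bo x y.
Definition dlift (G : pregraph) (D : decorated G) (a : pV (dgr D) + pE (dgr D)) : pV G + pE G :=
  match a with inl w => inl (dV D w) | inr t => inr (dE D t) end.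

Lemma dec_src G (D : decorated G) : is_graph G -> is_decorated G D -> injective (dE D) ->
  forall t w, (psrc t == Some w) = (psrc (dE D t) == Some (dV D w)).
Proof.
move=> hG [hD hv] inj t w.
by rewrite -(gr_vout hD) -(gr_vout hG) -(perm_mem (hv w).2) mem_map.
Qed.
Lemma dec_tgt G (D : decorated G) : is_graph G -> is_decorated G D -> injective (dE D) ->
  forall t w, (ptgt t == Some w) = (ptgt (dE D t) == Some (dV D w)).
Proof.
move=> hG [hD hv] inj t w.
by rewrite -(gr_vin hD) -(gr_vin hG) -(perm_mem (hv w).1) mem_map.
Qed.

Lemma dlift_R G (D : decorated G) : is_graph G -> is_decorated G D -> injective (dE D) ->
  forall a b, incid (dgr D) a b ->
  Rc (map (dE D) (pin (dgr D))) (map (dE D) (pout (dgr D))) (dlift a) (dlift b).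
Proof.
move=> hG hDD inj; have hD := hDD.1.
case=> [w|t] [w'|t'] //= H; rewrite /Rc /= !mem_map // -!(dec_src hG hDD inj) -!(dec_tgt hG hDD inj)
  (gr_in hD) (gr_out hD) ?H /=; move: H.
  by case: (psrc t') => [?|] ; case: (ptgt t') => [?|].
by case: (psrc t) => [?|] ; case: (ptgt t) => [?|].
Qed.

Lemma connect_map (T T' : finType) (e : rel T) (e' : rel T') (h : T -> T') :
  (forall x y, e x y -> e' (h x) (h y)) -> forall x y, connect e x y -> connect e' (h x) (h y).
Proof.
move=> he x y /connectP [p]; elim: p x => [|z p IH] x /=; first by move=> _ ->.
move=> /andP [exz pz] ey; apply: connect_trans (connect1 (he _ _ exz)) (IH _ pz ey).
Qed.

Lemma closed_R G (D : decorated G) : is_graph G -> is_decorated G D -> injective (dE D) ->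
  forall x y, psi D x ->
  Rc (map (dE D) (pin (dgr D))) (map (dE D) (pout (dgr D))) x y -> psi D y.
Proof.
move=> hG hDD inj; have hD := hDD.1; have hv := hDD.2.
case=> [z|e] [z'|e'] //=.
- move=> /existsP [w /eqP <-] /andP [/orP Hi _]; apply/existsP.
  case: Hi => Hi.
    rewrite -(gr_vout hG) -(perm_mem (hv w).2) in Hi.
    by case/mapP: Hi => t _ ->; exists t.
  rewrite -(gr_vin hG) -(perm_mem (hv w).1) in Hi.
  by case/mapP: Hi => t _ ->; exists t.
- move=> /existsP [t /eqP <-] /andP [/orP Hi]; rewrite /cut /= !mem_map // (gr_in hD) (gr_out hD).
  move=> Hc; apply/existsP; case: Hi => Hi.
    case E: (psrc t) => [w|]; last by rewrite E eqxx Hi in Hc.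
    move/eqP: E; rewrite (dec_src hG hDD inj) (eqP Hi) => /eqP [->].
    by exists w.
  case E: (ptgt t) => [w|]; last by rewrite E eqxx Hi orbT in Hc.
  move/eqP: E; rewrite (dec_tgt hG hDD inj) (eqP Hi) => /eqP [->].
  by exists w.
Qed.

Lemma closedR_connect G (D : decorated G) Bi Bo : (forall x y, psi D x -> Rc Bi Bo x y -> psi D y) ->
  forall x y, psi D x -> connect (Rc Bi Bo) x y -> psi D y.
Proof.
move=> hc x y px /connectP [p]; elim: p x px => [|z p IH] x px /=; first by move=> _ ->.
by move=> /andP [exz pz] ey; apply: (IH z (hc _ _ px exz) pz ey).
Qed.

Lemma psi_lift G (D : decorated G) y : psi D y -> exists a, y = dlift (D:=D) a.
Proof.
case: y => [z|e] /= /existsP [x /eqP <-]; [by exists (inl x) | by exists (inr x)].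
Qed.

Lemma psi_conn G (D : decorated G) : is_graph G -> is_decorated G D -> injective (dE D) ->
  forall x y, psi D x -> psi D y ->
  connect (Rc (map (dE D) (pin (dgr D))) (map (dE D) (pout (dgr D)))) x y.
Proof.
move=> hG hDD inj x y /psi_lift [a ->] /psi_lift [b ->].
apply: connect_map; first exact: dlift_R.
by case: hDD.1 => _ [_ [_ [_ [_ [hc _]]]]]; apply: hc.
Qed.

Lemma psi_mem G (D : decorated G) s e : e \in map (dE D) s -> psi D (inr e).
Proof. by case/mapP=> t _ ->; apply/existsP; exists t. Qed.

Lemma psi_sub G (D D' : decorated G) : is_graph G -> is_decorated G D -> is_decorated G D' ->
  injective (dE D) -> injective (dE D') ->
  map (dE D) (pin (dgr D)) = map (dE D') (pin (dgr D')) ->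
  map (dE D) (pout (dgr D)) = map (dE D') (pout (dgr D')) ->
  forall c, psi D c -> psi D' c -> forall y, psi D y -> psi D' y.
Proof.
move=> hG hD hD' i i' Ei Eo c pc pc' y py.
have := psi_conn hG hD i pc py; rewrite Ei Eo.
move=> C; exact: (closedR_connect (fun x z => closed_R hG hD' i' (x:=x) (y:=z)) pc' C).
Qed.

Lemma psi_common G (D D' : decorated G) : is_graph G -> is_decorated G D -> is_decorated G D' ->
  injective (dE D) -> injective (dE D') ->
  map (dE D) (pin (dgr D)) = map (dE D') (pin (dgr D')) ->
  map (dE D) (pout (dgr D)) = map (dE D') (pout (dgr D')) ->
  exists c, psi D c && psi D' c.
Proof.
move=> hG hD hD' i i' Ei Eo.
case E1: (map (dE D) (pin (dgr D))) => [|e s]; last first.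
  exists (inr e); apply/andP; split.
    by apply: (@psi_mem _ _ (pin (dgr D))); rewrite E1 mem_head.
  by apply: (@psi_mem _ _ (pin (dgr D'))); rewrite -Ei E1 mem_head.
case E2: (map (dE D) (pout (dgr D))) => [|e s]; last first.
  exists (inr e); apply/andP; split.
    by apply: (@psi_mem _ _ (pout (dgr D))); rewrite E2 mem_head.
  by apply: (@psi_mem _ _ (pout (dgr D'))); rewrite -Eo E2 mem_head.
have [_ [_ [_ [_ [n1 _]]]]] := hD.1; have [_ [_ [_ [_ [n2 _]]]]] := hD'.1.
case/card_gt0P: n1 => a _; case/card_gt0P: n2 => a' _.
exists (dlift a'); apply/andP; split; last first.
  by case: a' => [w|t] /=; apply/existsP; [exists w | exists t].
have cl := closedR_connect (fun x z => closed_R hG hD i (x:=x) (y:=z)).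
rewrite E1 E2 in cl; apply: (cl (dlift a)).
  by case: a => [w|t] /=; apply/existsP; [exists w | exists t].
have -> : connect (Rc [::] [::]) =2 connect (incid G).
  by apply: eq_connect => x y; rewrite /Rc; case: x; case: y => * /=; rewrite ?andbT.
by case: hG => _ [_ [_ [_ [_ [hc _]]]]]; apply: hc.
Qed.

Lemma iso_of G (D D' : decorated G) : is_graph G -> is_decorated G D -> is_decorated G D' ->
  injective (dE D) -> injective (dE D') -> injective (dV D) -> injective (dV D') ->
  map (dE D) (pin (dgr D)) = map (dE D') (pin (dgr D')) ->
  map (dE D) (pout (dgr D)) = map (dE D') (pout (dgr D')) ->
  dec_iso D D'.
Proof.
move=> hG hD hD' i i' j j' Ei Eo.
have [c /andP [pc pc']] := psi_common hG hD hD' i i' Ei Eo.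
have S1 y : psi D y -> psi D' y := psi_sub hG hD hD' i i' Ei Eo pc pc' (y:=y).
have S2 y : psi D' y -> psi D y := psi_sub hG hD' hD i' i (esym Ei) (esym Eo) pc' pc (y:=y).
have hV : forall w, exists w', dV D' w' == dV D w.
  move=> w; have : psi D (inl (dV D w)) by apply/existsP; exists w.
  by move/S1/existsP.
have hV' : forall w, exists w', dV D w' == dV D' w.
  move=> w; have : psi D' (inl (dV D' w)) by apply/existsP; exists w.
  by move/S2/existsP.
have hE : forall t, exists t', dE D' t' == dE D t.
  move=> t; have : psi D (inr (dE D t)) by apply/existsP; exists t.
  by move/S1/existsP.
have hE' : forall t, exists t', dE D t' == dE D' t.
  move=> t; have : psi D' (inr (dE D' t)) by apply/existsP; exists t.
  by move/S2/existsP.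
pose phiV w := xchoose (hV w); pose psiV w := xchoose (hV' w).
pose phiE t := xchoose (hE t); pose psiE t := xchoose (hE' t).
have phiVE w : dV D' (phiV w) = dV D w := eqP (xchooseP (hV w)).
have psiVE w : dV D (psiV w) = dV D' w := eqP (xchooseP (hV' w)).
have phiEE t : dE D' (phiE t) = dE D t := eqP (xchooseP (hE t)).
have psiEE t : dE D (psiE t) = dE D' t := eqP (xchooseP (hE' t)).
exists phiV, phiE; split; [|split; [|split; [|split; [|split; [|split]]]]].
- by exists psiV => w; [apply: j; rewrite psiVE phiVE | apply: j'; rewrite phiVE psiVE].
- by exists psiE => w; [apply: i; rewrite psiEE phiEE | apply: i'; rewrite phiEE psiEE].
- move=> t; case E: (psrc t) => [w|] /=.
    apply/eqP; rewrite (dec_src hG hD' i') phiEE phiVE -(dec_src hG hD i) E //.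
  case E': (psrc (phiE t)) => [w'|] //.
  move/eqP: E'; rewrite (dec_src hG hD' i') phiEE -(psiVE w') -(dec_src hG hD i) E //.
- move=> t; case E: (ptgt t) => [w|] /=.
    apply/eqP; rewrite (dec_tgt hG hD' i') phiEE phiVE -(dec_tgt hG hD i) E //.
  case E': (ptgt (phiE t)) => [w'|] //.
  move/eqP: E'; rewrite (dec_tgt hG hD' i') phiEE -(psiVE w') -(dec_tgt hG hD i) E //.
- by apply: (inj_map i'); rewrite -map_comp (eq_map phiEE) Ei.
- by apply: (inj_map i'); rewrite -map_comp (eq_map phiEE) Eo.
- by [].
Qed.

Lemma mem_zipP (A B : eqType) (s : seq A) (s' : seq B) a b :
  (a,b) \in zip s s' -> (a \in s) /\ (b \in s').
Proof.
elim: s s' => [|x s IH] [|y s'] //=; rewrite in_cons.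
case/orP => [/eqP [-> ->]|/IH [h1 h2]]; split; by rewrite ?in_cons ?eqxx ?h1 ?h2 ?orbT.
Qed.

Lemma zip_funl (A B : eqType) (s : seq A) (s' : seq B) a b b' :
  uniq s -> (a,b) \in zip s s' -> (a,b') \in zip s s' -> b = b'.
Proof.
elim: s s' => [|x s IH] [|y s'] //= /andP [nx us]; rewrite !in_cons.
case/orP => [/eqP [ea eb] | h1]; case/orP => [/eqP [ea' eb'] | h2].
- by rewrite eb eb'.
- by move: nx; rewrite -ea (mem_zipP h2).1.
- by move: nx; rewrite -ea' (mem_zipP h1).1.
- exact: IH h1 h2.
Qed.

Lemma zip_funr (A B : eqType) (s : seq A) (s' : seq B) a a' b :
  uniq s' -> (a,b) \in zip s s' -> (a',b) \in zip s s' -> a = a'.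
Proof.
elim: s s' => [|x s IH] [|y s'] //= /andP [nx us]; rewrite !in_cons.
case/orP => [/eqP [ea eb] | h1]; case/orP => [/eqP [ea' eb'] | h2].
- by rewrite ea ea'.
- by move: nx; rewrite -eb (mem_zipP h2).2.
- by move: nx; rewrite -eb' (mem_zipP h1).2.
- exact: IH h1 h2.
Qed.

Lemma zip_map_eq (A B : eqType) (C : Type) (g : A -> C) (g' : B -> C) s s' a b :
  map g s = map g' s' -> (a,b) \in zip s s' -> g a = g' b.
Proof.
elim: s s' => [|x s IH] [|y s'] //= [e1 e2]; rewrite in_cons.
by case/orP => [/eqP [-> ->] // | /(IH _ e2)].
Qed.

Definition flow (H G : pregraph) (f : prop_morph H G) : rel (imX H G f) := fun x y =>
  match x, y with
  | inr t, inl h => (tagged t, h) \in zip (pout (dgr (f1 f (tag t)))) (pvout H (tag t))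
  | inl h, inr t => (tagged t, h) \in zip (pin (dgr (f1 f (tag t)))) (pvin H (tag t))
  | _, _ => false end.

Arguments flow {H G} f x y.

Lemma glue_flow H G (f : prop_morph H G) x y : glue H G f x y = flow f x y || flow f y x.
Proof. by case: x => [h|t]; case: y => [h'|t'] //=; rewrite /glue /= ?orbF // orbC. Qed.

Lemma flow_fun H G (f : prop_morph H G) : is_graph H -> is_prop_morph f ->
  forall x y y', flow f x y -> flow f x y' -> y = y'.
Proof.
move=> hH hf; case=> [h|[u a]] [h'|[u' a']] [h''|[u'' a'']] //= h1 h2.
  have e1 := (mem_zipP h1).2; have e2 := (mem_zipP h2).2.
  rewrite (gr_vin hH) in e1; rewrite (gr_vin hH) in e2.
  move: (eqP e1) (eqP e2) => -> [E]; subst u''.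
  by rewrite (zip_funr (gr_uvin hH u') h1 h2).
by rewrite (zip_funl (gr_uout (hf u).1.1) h1 h2).
Qed.

Lemma flow_inj H G (f : prop_morph H G) : is_graph H -> is_prop_morph f ->
  forall x x' y, flow f x y -> flow f x' y -> x = x'.
Proof.
move=> hH hf; case=> [h|[u a]] [h'|[u' a']] [h''|[u'' a'']] //= h1 h2.
  by rewrite (zip_funl (gr_uin (hf u'').1.1) h1 h2).
have e1 := (mem_zipP h1).2; have e2 := (mem_zipP h2).2.
rewrite (gr_vout hH) in e1; rewrite (gr_vout hH) in e2.
move: (eqP e1) (eqP e2) => -> [E]; subst u'.
by rewrite (zip_funr (gr_uvout hH u) h1 h2).
Qed.

Definition Qp H G (f : prop_morph H G) (v : pV H) (y : imX H G f) : Prop :=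
  match y with
  | inl h => exists u0, psrc h = Some u0 /\ connect (vrel H) v u0
  | inr t => exists h, (exists u0, psrc h = Some u0 /\ connect (vrel H) v u0) /\ ptgt h = Some (tag t)
  end.

Arguments Qp {H G} f v y.

Lemma flow_pot H G (f : prop_morph H G) : is_graph H ->
  forall v a (y : imX H G f), connect (flow f) (inr (existT _ v a)) y ->
  y = inr (existT _ v a) \/ Qp f v y.
Proof.
move=> hH v a y /connectP [p]; elim/last_ind: p y => [|p z IH] y /=.
  by move=> _ ->; left.
rewrite rcons_path last_rcons => /andP [pp fz] ->; right.
case: (IH _ pp erefl) => [E|].
  rewrite E in fz; case: z fz => [h|t] //= fz.
  exists v; split; last exact: connect0.
  by apply/eqP; rewrite -(gr_vout hH); exact: (mem_zipP fz).2.
move: (last _ p) fz => y' fz Qy.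
case: y' Qy fz => [h|[u b]] Qy; case: z => [h'|[u' b']] //= fz.
  exists h; split => //.
  by apply/eqP; rewrite -(gr_vin hH); exact: (mem_zipP fz).2.
case: Qy => h0 [[u0 [s0 c0]] t0] /=.
exists u; split.
  by apply/eqP; rewrite -(gr_vout hH); exact: (mem_zipP fz).2.
apply: connect_trans c0 (connect1 _); apply/existsP; exists h0.
by rewrite s0 t0 !eqxx.
Qed.

Lemma tagged_inj (I : eqType) (T_ : I -> Type) (v : I) (a b : T_ v) :
  existT T_ v a = existT T_ v b -> a = b.
Proof.
move=> E; have := congr1 (tagged_as (existT T_ v a)) E.
by rewrite !tagged_asE.
Qed.

Lemma glue_A H G (f : prop_morph H G) : is_graph H -> is_prop_morph f ->
  forall v a b, connect (glue H G f) (inr (existT _ v a)) (inr (existT _ v b)) -> a = b.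
Proof.
move=> hH hf v a b.
rewrite (eq_connect (glue_flow (f:=f))).
have acyc : forall u w, vrel H u w -> ~~ connect (vrel H) w u.
  by case: hH => _ [_ [_ [_ [_ [_ h]]]]].
case/(sym_connect_split (flow_fun hH hf) (flow_inj hH hf)) => C.
  case: (flow_pot hH C) => [E|].
  by case: E => E; rewrite (tagged_inj E).
  move=> [h [[u0 [s0 c0]] /= t0]].
  have vr : vrel H u0 v by apply/existsP; exists h; rewrite s0 t0 !eqxx.
  by move: (acyc _ _ vr); rewrite c0.
case: (flow_pot hH C) => [E|].
  by case: E => E; rewrite (tagged_inj E).
move=> [h [[u0 [s0 c0]] /= t0]].
have vr : vrel H u0 v by apply/existsP; exists h; rewrite s0 t0 !eqxx.
by move: (acyc _ _ vr); rewrite c0.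
Qed.

Lemma flow_col H G (f : prop_morph H G) : is_prop_morph f ->
  forall x y, flow f x y -> colX H G f x = colX H G f y.
Proof.
move=> hf; case=> [h|[u a]]; case=> [h'|[u' a']] //= fz.
  by rewrite (zip_map_eq (hf u').2.1 fz).
by rewrite (zip_map_eq (hf u).2.2 fz).
Qed.

Lemma conn_col H G (f : prop_morph H G) : is_prop_morph f ->
  forall x y, connect (glue H G f) x y -> colX H G f x = colX H G f y.
Proof.
move=> hf x y /connectP [p]; elim: p x => [|z p IH] x /=; first by move=> _ ->.
case/andP => gz pz ey; rewrite -(IH z pz ey).
move: gz; rewrite glue_flow => /orP [] fz; first exact: flow_col.
by rewrite (flow_col hf fz).
Qed.

Lemma dE_inj H G (f : prop_morph H G) : is_graph H -> is_prop_morph f ->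
  is_subgraph (morph_image f) -> forall v, injective (dE (f1 f v)).
Proof.
move=> hH hf [_ [iE _]] v a b E.
have : imcl H G f (inr (existT _ v a)) = imcl H G f (inr (existT _ v b)).
  apply: iE => /=.
  rewrite -(conn_col hf (connect_root _ (inr (existT _ v a)))).
  by rewrite -(conn_col hf (connect_root _ (inr (existT _ v b)))).
move/(congr1 val) => /= /eqP; rewrite root_connect; last exact: glue_connect_sym.
exact: glue_A.
Qed.

Lemma dV_inj H G (f : prop_morph H G) :
  is_subgraph (morph_image f) -> forall v, injective (dV (f1 f v)).
Proof.
move=> [_ [_ [iV _]]] v a b E.
have := iV (existT _ v a) (existT _ v b) E.
exact: tagged_inj.
Qed.

Theorem mainTheorem2 (G H : pregraph) (f f' : prop_morph H G) :
  is_graph G -> is_graph H ->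
  is_prop_morph f -> is_prop_morph f' ->
  is_subgraph (morph_image f) -> is_subgraph (morph_image f') ->
  (forall e : pE H, f0 f e = f0 f' e) ->
  (forall e : pE H, f0 f e = f0 f' e) /\
  (forall v : pV H, dec_iso (f1 f v) (f1 f' v)).
Proof.
move=> hG hH hf hf' hs hs' e0; split=> // v.
apply: iso_of => //.
- exact: (hf v).1.
- exact: (hf' v).1.
- exact: dE_inj.
- exact: dE_inj.
- exact: dV_inj.
- exact: dV_inj.
- by rewrite (hf v).2.1 (hf' v).2.1; apply: eq_map.
- by rewrite (hf v).2.2 (hf' v).2.2; apply: eq_map.
Qed.
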